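(* Let $\mathbf{k}$ be a field, $p\ge3$ an integer, and let $\varphi:\mathbf{k}[e_1,\dots,e_{2p}]\to\mathbf{k}[u_1,\dots,u_p,\alpha]$ be the $\mathbf{k}$-algebra homomorphism with $\varphi(e_i)=u_i$ for $1\le i\le p-1$, $\varphi(e_p)=u_p+\alpha$, $\varphi(e_i)=u_{i-p}\alpha$ for $p+1\le i\le 2p$, and $\mathcal{A}=\operatorname{Im}(\varphi)$. Grade $\mathbf{k}[u_1,\dots,u_p,\alpha]$ by $\mathbb{Z}^p$ with $\deg(u_i)=\epsilon_i$ and $\deg(\alpha)=\epsilon_p$, and fix any monomial order on $\mathbf{k}[u_1,\dots,u_p,\alpha]$ in which $\alpha\prec u_p$. Then for $\underline{d}=(d_1,\dots,d_p)\in\mathbb{Z}_{\ge0}^p$, $$\dim_{\mathbf{k}}(\mathrm{in}(\mathcal{A}))_{\underline{d}}=\begin{cases} d_p+1 & \text{if } d_i>0 \text{ for some } 1\le i\le p-1,\\ 1+\lfloor d_p/2\rfloor & \text{if } d_i=0 \text{ for all } 1\le i\le p-1.\end{cases}$$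
   Context: $\epsilon_i$ denotes the $i$-th standard basis vector of $\mathbb{Z}^p$. The initial algebra $\mathrm{in}(\mathcal{A})$ is the $\mathbf{k}$-span of the leading monomials of the nonzero elements of $\mathcal{A}$; $(\mathrm{in}(\mathcal{A}))_{\underline d}$ is its span of monomials of multidegree $\underline d$. *)

(* Defs.v *)
From HB Require Import structures.
From mathcomp Require Import all_boot all_order all_algebra.
From mathcomp Require Import mpoly.
Set Implicit Arguments. Unset Strict Implicit. Unset Printing Implicit Defensive.
Import Order.TTheory GRing.Theory.
Local Open Scope ring_scope.

Record monomial_order (n : nat) (le : rel 'X_{1..n}) : Prop := MonomialOrder {
  mo_refl  : reflexive le;
  mo_anti  : antisymmetric le;
  mo_trans : transitive le;
  mo_total : total le;
  mo_mul   : forall m1 m2 m, le m1 m2 -> le (m1 + m)%MM (m2 + m)%MM;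
  mo_ge0   : forall m, le 0%MM m }.

Definition is_lead_mon (R : nzRingType) (n : nat) (le : rel 'X_{1..n})
  (f : {mpoly R[n]}) (m : 'X_{1..n}) : Prop :=
  m \in msupp f /\ forall m', m' \in msupp f -> le m' m.

Definition kspan (k : fieldType) (n : nat) (P : {mpoly k[n]} -> Prop)
  (q : {mpoly k[n]}) : Prop :=
  exists (s : seq {mpoly k[n]}) (c : seq k),
    (forall x, x \in s -> P x) /\ q = \sum_(i < size s) c`_i *: s`_i.

Definition has_dim (k : fieldType) (n : nat) (S : {mpoly k[n]} -> Prop)
  (r : nat) : Prop :=
  exists b : 'I_r -> {mpoly k[n]},
    [/\ forall i, S (b i),
        forall c : 'I_r -> k, \sum_(i < r) c i *: b i = 0 -> forall i, c i = 0
      & forall q, S q -> exists c : 'I_r -> k, q = \sum_(i < r) c i *: b i].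

(* Variables of k[u_1,...,u_p,alpha]: index i < p (0-based) is u_(i+1),
   index p (= ord_max) is alpha.  Variables of k[e_1,...,e_2p]: index
   j < 2p (0-based) is e_(j+1). *)

Definition phi_gen (k : fieldType) (p : nat) (j : nat) : {mpoly k[p.+1]} :=
  if (j < p.-1)%N then 'X_(inord j)
  else if j == p.-1 then 'X_(inord p.-1) + 'X_(inord p)
  else 'X_(inord (j - p)) * 'X_(inord p).

Definition phi (k : fieldType) (p : nat) (f : {mpoly k[2 * p]})
  : {mpoly k[p.+1]} :=
  comp_mpoly [tuple phi_gen k p j | j < 2 * p] f.

Definition inA (k : fieldType) (p : nat) (q : {mpoly k[p.+1]}) : Prop :=
  exists f : {mpoly k[2 * p]}, q = phi f.

Definition zdeg (p : nat) (m : 'X_{1..p.+1}) (i : 'I_p) : nat :=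
  if i.+1 == p then (m (widen_ord (leqnSn p) i) + m ord_max)%N
  else m (widen_ord (leqnSn p) i).

Definition inA_deg (k : fieldType) (p : nat) (le : rel 'X_{1..p.+1})
  (d : 'I_p -> nat) : {mpoly k[p.+1]} -> Prop :=
  kspan (fun q => exists m : 'X_{1..p.+1},
           [/\ q = 'X_[m], zdeg m =1 d &
               exists a : {mpoly k[p.+1]}, [/\ inA a, a != 0 & is_lead_mon le a m]]).

(* d_p, the last coordinate of d = (d_1, ..., d_p) (0 if p = 0) *)
Definition last_coord (p : nat) : ('I_p -> nat) -> nat :=
  match p with 0 => fun _ => 0%N | q.+1 => fun d => d ord_max end.

(* Main.v *)
Require Import Defs.
From HB Require Import structures.
From mathcomp Require Import all_boot all_order all_algebra.
From mathcomp Require Import mpoly.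
From mathcomp Require Import all_fingroup.
From mathcomp Require Import zify ring.
Set Implicit Arguments. Unset Strict Implicit.
Import GRing.Theory.
Local Open Scope ring_scope.

Lemma has_dim_mon (k : fieldType) (n r : nat) (Pq : {mpoly k[n]} -> Prop)
  (mon : 'I_r -> 'X_{1..n}) :
  injective mon -> (forall j, Pq 'X_[mon j]) ->
  (forall q, Pq q -> exists j, q = 'X_[mon j]) ->
  has_dim (kspan Pq) r.
Proof.
move=> inj hP hQ; exists (fun j => 'X_[mon j]); split.
- move=> i; exists [:: 'X_[mon i]], [:: 1]; split.
    by move=> x; rewrite inE => /eqP ->.
  by rewrite big_ord1 scale1r.
- move=> c h i.
  have := congr1 (mcoeff (mon i)) h.
  rewrite raddf_sum (bigD1 i) //= big1 ?addr0.
  + by rewrite mcoeffZ mcoeffX eqxx mulr1 raddf0.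
  + move=> j hj; rewrite mcoeffZ mcoeffX (inj_eq inj) (negbTE hj) mulr0 //.
- move=> q [s [c [hs ->]]].
  apply: (big_ind (fun q => exists c' : 'I_r -> k, q = \sum_(j < r) c' j *: 'X_[mon j])).
  + exists (fun=> 0); by rewrite big1 // => j _; rewrite scale0r.
  + move=> x y [cx ->] [cy ->]; exists (fun j => cx j + cy j).
    by rewrite -big_split; apply eq_bigr => j _; rewrite scalerDl.
  + move=> i _; have [j ->] := hQ _ (hs _ (mem_nth 0 (ltn_ord i))).
    exists (fun j' => if j' == j then c`_i else 0).
    rewrite (bigD1 j) //= eqxx big1 ?addr0 // => j' /negbTE ->; by rewrite scale0r.
Qed.

Section Ord.
Variables (n : nat) (le : rel 'X_{1..n}) (hle : monomial_order le).

Lemma le_addl m1 m2 m : le m1 m2 -> le (m + m1)%MM (m + m2)%MM.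
Proof. by move=> h; rewrite ![(m + _)%MM]addmC; apply: (mo_mul hle). Qed.

Lemma mulmS (m : 'X_{1..n}) j : (m *+ j.+1 = m *+ j + m)%MM.
Proof. by apply/mnmP => i; rewrite mnmDE !mulmnE mulnS addnC. Qed.

Lemma le_mulU i j c : le U_(i)%MM U_(j)%MM -> le (U_(i) *+ c)%MM (U_(j) *+ c)%MM.
Proof.
move=> h; elim: c => [|c ih]; first by rewrite (mo_refl hle).
rewrite !mulmS; apply: (mo_trans hle (mo_mul hle _ ih)).
exact: le_addl.
Qed.

Lemma neq_mulU (i j : 'I_n) c : i != j -> (0 < c)%N -> (U_(i) *+ c)%MM != (U_(j) *+ c)%MM.
Proof.
move=> hij hc; apply/eqP => /mnmP /(_ i); rewrite !mulmnE !mnm1E eqxx eq_sym (negbTE hij).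
lia.
Qed.
End Ord.

Section Main.
Variables (k : fieldType) (p : nat) (hp : (2 <= p)%N).

Local Notation P1 := (inord p.-1 : 'I_p.+1).
Local Notation AL := (ord_max : 'I_p.+1).

Lemma valP1 : val P1 = p.-1.
Proof. by rewrite /= inordK //; lia. Qed.

Lemma inord_p : (inord p : 'I_p.+1) = AL.
Proof. by apply: val_inj; rewrite /= inordK. Qed.

Lemma P1_AL : P1 != AL.
Proof. by apply/eqP => /(congr1 val); rewrite valP1 /=; lia. Qed.

Lemma ord3 (i : 'I_p.+1) : [\/ (i < p.-1)%N, i = P1 | i = AL].
Proof.
case: (ltnP i p.-1) => h; first by constructor 1.
case: (eqVneq (i : nat) p.-1) => h2.
  by constructor 2; apply: val_inj; rewrite valP1.
constructor 3; apply: val_inj => /=; have := ltn_ord i; lia.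
Qed.

Definition inAk := inA (k := k) (p := p).

Lemma inA_phi g : inAk (phi g). Proof. by exists g. Qed.

Lemma inA1 : inAk 1.
Proof. by exists 1; rewrite /phi rmorph1. Qed.

Lemma inAM x y : inAk x -> inAk y -> inAk (x * y).
Proof. by move=> [a ->] [b ->]; exists (a * b); rewrite /phi rmorphM. Qed.

Lemma inAB x y : inAk x -> inAk y -> inAk (x - y).
Proof. by move=> [a ->] [b ->]; exists (a - b); rewrite /phi rmorphB. Qed.

Lemma inAX x n : inAk x -> inAk (x ^+ n).
Proof. by move=> [a ->]; exists (a ^+ n); rewrite /phi rmorphXn. Qed.

Lemma inA_gen j : (j < 2 * p)%N -> inAk (phi_gen k p j).
Proof.
move=> hj; exists 'X_(Ordinal hj).
by rewrite /phi comp_mpolyXU -tnth_nth tnth_mktuple.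
Qed.

Lemma inA_Xlow (i : 'I_p.+1) : (i < p.-1)%N -> inAk 'X_i.
Proof.
move=> hi; have := @inA_gen i; rewrite /phi_gen hi inord_val; apply; lia.
Qed.

Lemma inA_S : inAk ('X_P1 + 'X_AL).
Proof.
have := @inA_gen p.-1; rewrite /phi_gen ltnn eqxx inord_p; apply; lia.
Qed.

Lemma inA_T : inAk ('X_P1 * 'X_AL).
Proof.
have := @inA_gen (p.-1 + p); rewrite /phi_gen.
have -> : (p.-1 + p < p.-1)%N = false by lia.
have -> : (p.-1 + p == p.-1) = false by apply/eqP; lia.
rewrite addnK inord_p; apply; lia.
Qed.

Lemma inA_Xa (i : 'I_p.+1) : (i < p.-1)%N -> inAk ('X_i * 'X_AL).
Proof.
move=> hi; have := @inA_gen ((i:nat) + p); rewrite /phi_gen.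
have -> : ((i:nat) + p < p.-1)%N = false by lia.
have -> : ((i:nat) + p == p.-1)%N = false by apply/eqP; lia.
rewrite addnK inord_p inord_val; apply; lia.
Qed.

End Main.

Section Main.
Variables (k : fieldType) (p : nat) (hp : (2 <= p)%N).
Local Notation P1 := (inord p.-1 : 'I_p.+1).
Local Notation AL := (ord_max : 'I_p.+1).
Local Notation inAk := (inAk k p).
Definition ufree (m : 'X_{1..p.+1}) := [forall i : 'I_p.+1, (i < p.-1)%N ==> (m i == 0%N)].

Definition pis : (p.+1).-tuple {mpoly k[p.+1]} :=
  [tuple (if (i < p.-1)%N then 0 else 'X_i) | i < p.+1].
Local Notation pi := (comp_mpoly pis).
Definition tau : 'S_p.+1 := tperm P1 AL.

Lemma piX m : pi 'X_[m] = if ufree m then 'X_[m] else 0.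
Proof.
rewrite comp_mpolyX; case: ifP => H.
- rewrite [RHS]mpolyXE_id; apply eq_bigr => i _; rewrite tnth_mktuple.
  case: ifP => // hi; have := forallP H i; rewrite hi /= => /eqP ->.
  by rewrite !expr0.
- move/negbT: H => /forallPn [i]; rewrite negb_imply => /andP [hi hm].
  by rewrite (bigD1 i) //= tnth_mktuple hi expr0n (negbTE hm) mul0r.
Qed.

Lemma pi_coef f m : ufree m -> (pi f)@_m = f@_m.
Proof.
move=> hm; have E := mpolyE f.
have -> : pi f = \sum_(m' <- msupp f) f@_m' *: pi 'X_[m'].
  rewrite {1}E raddf_sum; apply eq_bigr => m' _; exact: comp_mpolyZ.
rewrite [in RHS]E !raddf_sum /=.
apply eq_bigr => m' _; rewrite !mcoeffZ piX.
case: ifP => // hf; rewrite mcoeffX raddf0.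
have -> : (m' == m) = false by apply: contraFF hf => /eqP ->.
by [].
Qed.

Lemma piXU (i : 'I_p.+1) : pi 'X_i = if (i < p.-1)%N then 0 else 'X_i.
Proof. by rewrite comp_mpolyXU -tnth_nth tnth_mktuple. Qed.

Lemma msymXU (i : 'I_p.+1) : msym tau ('X_i : {mpoly k[p.+1]}) = 'X_(tau i).
Proof.
rewrite msymX; congr mpolyX; apply/mnmP => j; rewrite mnmE !mnm1E tpermV.
by rewrite (can2_eq (tpermK _ _) (tpermK _ _)) eq_sym.
Qed.

Lemma gen_sym j : (j < 2 * p)%N ->
  msym tau (pi (phi_gen k p j)) = pi (phi_gen k p j).
Proof.
move=> hj; rewrite /phi_gen; case: ifP => h1.
  by rewrite piXU /= inordK ?h1 ?raddf0 //; lia.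
case: ifP => h2.
  rewrite raddfD /= !piXU valP1 // inord_p /= ltnn.
  have -> : (p < p.-1)%N = false by lia.
  by rewrite raddfD /= !msymXU tpermL tpermR addrC.
rewrite rmorphM /= !piXU inord_p /= inordK; last by lia.
have -> : (p < p.-1)%N = false by lia.
case: ifP => h3; first by rewrite mul0r raddf0.
have -> : (inord (j - p) : 'I_p.+1) = P1 by congr inord; move/negbT: h2; lia.
by rewrite rmorphM /= !msymXU tpermL tpermR mulrC.
Qed.

Lemma piM (x y : {mpoly k[p.+1]}) : pi (x * y) = pi x * pi y.
Proof. by rewrite rmorphM. Qed.
Lemma piZ (c : k) (y : {mpoly k[p.+1]}) : pi (c *: y) = c *: pi y.
Proof. by rewrite linearZ. Qed.
Lemma sym_piphi g : msym tau (pi (phi g)) = pi (phi g).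
Proof.
rewrite /phi (comp_mpolyEX g) (raddf_sum (comp_mpoly pis)) (raddf_sum (msym tau)) /=; apply eq_bigr => m _.
rewrite piZ msymZ; congr (_ *: _).
rewrite comp_mpolyX.
rewrite (rmorph_prod (comp_mpoly pis)) /= (rmorph_prod (msym tau)) /=; apply eq_bigr => i _.
rewrite (rmorphXn (comp_mpoly pis)) rmorphXn tnth_mktuple; congr (_ ^+ _).
apply: gen_sym; exact: ltn_ord.
Qed.
End Main.

Section Main.
Variables (k : fieldType) (p : nat) (hp : (2 <= p)%N).
Local Notation P1 := (inord p.-1 : 'I_p.+1).
Local Notation AL := (ord_max : 'I_p.+1).
Local Notation inAk := (@inAk k p).
Local Notation pi := (comp_mpoly (@pis k p)).
Local Notation tau := (@tau p).
Local Notation ufree := (@ufree p).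

Lemma lowP1 (i : 'I_p.+1) : (i < p.-1)%N -> (P1 == i) = false.
Proof. move=> h; apply/negbTE/eqP => /(congr1 (@nat_of_ord _)); rewrite /= inordK; lia. Qed.
Lemma lowAL (i : 'I_p.+1) : (i < p.-1)%N -> (AL == i) = false.
Proof. move=> h; apply/negbTE/eqP => /(congr1 (@nat_of_ord _)) /=; lia. Qed.
Lemma P1low (i : 'I_p.+1) : (i < p.-1)%N -> (i == P1) = false.
Proof. by move=> h; rewrite eq_sym lowP1. Qed.
Lemma ALlow (i : 'I_p.+1) : (i < p.-1)%N -> (i == AL) = false.
Proof. by move=> h; rewrite eq_sym lowAL. Qed.
Lemma P1AL : (P1 == AL) = false.
Proof. by apply/negbTE; apply: P1_AL. Qed.
Lemma ALP1 : (AL == P1) = false.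
Proof. by apply/negbTE; rewrite eq_sym P1_AL. Qed.

Lemma case2_lead (le : rel 'X_{1..p.+1}) (hle : monomial_order le)
  (halpha : le U_(ord_max)%MM U_(inord p.-1)%MM /\
            U_(ord_max)%MM != U_(inord p.-1)%MM :> 'X_{1..p.+1})
  f m : inAk f -> is_lead_mon le f m -> ufree m -> (m AL <= m P1)%N.
Proof.
move=> [g ->] [hm hmax] hfree.
set mt := [multinom m (tau i) | i < p.+1].
have lowtau (i : 'I_p.+1) : (i < p.-1)%N -> tau i = i.
  by move=> hi; rewrite tpermD ?lowP1 ?lowAL.
have hfree_t : ufree mt.
  apply/forallP => i; apply/implyP => hi; rewrite mnmE lowtau //.
  exact: (implyP (forallP hfree i)).
have hc : (phi g)@_mt = (phi g)@_m.
  rewrite -(pi_coef _ hfree) -sym_piphi // (mcoeff_sym (pi (phi g)) tau m) pi_coef //.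
have : mt \in msupp (phi g) by rewrite mcoeff_msupp hc -mcoeff_msupp.
move/hmax => hle1.
rewrite leqNgt; apply/negP => hlt.
set a := m P1; set c := (m AL - m P1)%N.
have hfm : forall i : 'I_p.+1, (i < p.-1)%N -> m i = 0%N.
  by move=> i hi; apply/eqP; exact: (implyP (forallP hfree i)).
have e1 : m = (U_(P1) *+ a + U_(AL) *+ a + U_(AL) *+ c)%MM.
  apply/mnmP => i; rewrite !mnmDE !mulmnE !mnm1E.
  case: (ord3 hp i) => [hi|->|->].
  - by rewrite lowP1 // lowAL // hfm.
  - by rewrite eqxx ALP1 /a; lia.
  - by rewrite eqxx P1AL /a /c; lia.
have e2 : mt = (U_(P1) *+ a + U_(AL) *+ a + U_(P1) *+ c)%MM.
  apply/mnmP => i; rewrite !mnmDE !mulmnE !mnm1E mnmE.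
  case: (ord3 hp i) => [hi|->|->].
  - by rewrite lowtau // lowP1 // lowAL // hfm.
  - by rewrite tpermL eqxx ALP1 /a /c; lia.
  - by rewrite tpermR eqxx P1AL /a; lia.
have hle2 : le m mt.
  rewrite e1 e2; apply: (le_addl hle); apply: (le_mulU hle); exact: halpha.1.
have : m = mt by apply: (mo_anti hle); rewrite hle1 hle2.
rewrite e1 e2 => /addmI; apply/eqP; apply: neq_mulU; first by rewrite ALP1.
rewrite /c; lia.
Qed.
End Main.

Section Main.
Variables (k : fieldType) (p : nat) (hp : (2 <= p)%N).
Local Notation P1 := (inord p.-1 : 'I_p.+1).
Local Notation AL := (ord_max : 'I_p.+1).
Local Notation inAk := (@inAk k p).



Lemma Q_in (i0 : 'I_p.+1) : (i0 < p.-1)%N ->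
  forall a b, inAk ('X_i0 * ('X_P1 ^+ a * 'X_AL ^+ b)).
Proof.
move=> h0 a b; move: (leqnn (a + b)%N); move: {2}(a + b)%N => s.
elim: s a b => [|s IH] a b hs.
  have [-> ->] : a = 0%N /\ b = 0%N by lia.
  by rewrite !expr0 !mulr1; apply: inA_Xlow.
have hG : inAk ('X_i0 * ('X_P1 ^+ 0 * 'X_AL ^+ 1)).
  by rewrite expr0 mul1r expr1; apply: inA_Xa.
have hMix : forall a' b', (a' + b' <= s)%N -> inAk ('X_i0 * ('X_P1 ^+ a'.+1 * 'X_AL ^+ b'.+1)).
  move=> a' b' hab.
  have -> : 'X_i0 * ('X_P1 ^+ a'.+1 * 'X_AL ^+ b'.+1) =
            ('X_P1 * 'X_AL) * ('X_i0 * ('X_P1 ^+ a' * 'X_AL ^+ b')) :> {mpoly k[p.+1]}.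
    by rewrite !exprS; ring.
  apply: inAM; first exact: inA_T.
  apply: IH; lia.
case: a b hs => [|a'] [|b'] hs.
- by apply: IH.
- case: b' hs => [|b''] hs; first exact: hG.
  have -> : 'X_i0 * ('X_P1 ^+ 0 * 'X_AL ^+ b''.+2) =
            'X_i0 * ('X_P1 ^+ 0 * 'X_AL ^+ b''.+1) * ('X_P1 + 'X_AL) -
            'X_i0 * ('X_P1 ^+ 1 * 'X_AL ^+ b''.+1) :> {mpoly k[p.+1]}.
    by rewrite !exprS !expr0; ring.
  apply: inAB; last by apply: hMix; lia.
  apply: inAM; last exact: inA_S.
  apply: IH; lia.
- case: a' hs => [|a''] hs.
    have -> : 'X_i0 * ('X_P1 ^+ 1 * 'X_AL ^+ 0) =
            'X_i0 * ('X_P1 ^+ 0 * 'X_AL ^+ 0) * ('X_P1 + 'X_AL) -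
            'X_i0 * ('X_P1 ^+ 0 * 'X_AL ^+ 1) :> {mpoly k[p.+1]}.
      by rewrite !expr1 !expr0; ring.
    apply: inAB => //; apply: inAM; last exact: inA_S.
    apply: IH; lia.
  have -> : 'X_i0 * ('X_P1 ^+ a''.+2 * 'X_AL ^+ 0) =
            'X_i0 * ('X_P1 ^+ a''.+1 * 'X_AL ^+ 0) * ('X_P1 + 'X_AL) -
            'X_i0 * ('X_P1 ^+ a''.+1 * 'X_AL ^+ 1) :> {mpoly k[p.+1]}.
    by rewrite !exprS !expr0; ring.
  apply: inAB; last by apply: hMix; lia.
  apply: inAM; last exact: inA_S.
  apply: IH; lia.
- by apply: hMix; lia.
Qed.

Lemma low_in (m : 'X_{1..p.+1}) : (forall i : 'I_p.+1, ~~ (i < p.-1)%N -> m i = 0%N) ->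
  inAk 'X_[m].
Proof.
move=> h; rewrite mpolyXE_id.
apply: (big_ind (fun x => inAk x)); [exact: inA1 | exact: inAM |].
move=> i _; case: (boolP (i < p.-1)%N) => hi.
  by apply: inAX; apply: inA_Xlow.
by rewrite h // expr0; apply: inA1.
Qed.

Lemma mon_in (m : 'X_{1..p.+1}) (w : 'I_p.+1) : (w < p.-1)%N -> (0 < m w)%N ->
  inAk 'X_[m].
Proof.
move=> hw hmw.
set m0 := (U_(w) + (U_(P1) *+ m P1 + U_(AL) *+ m AL))%MM.
have hle : (m0 <= m)%MM.
  apply/mnm_lepP => i; rewrite !mnmDE !mulmnE !mnm1E.
  case: (ord3 hp i) => [hi|->|->].
  - rewrite (lowP1 hp) // (lowAL hp) //; case: eqP => [<-|]; lia.
  - rewrite eqxx (ALP1 hp) (P1low hp) //; lia.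
  - rewrite eqxx (P1AL hp) (ALlow hp) //; lia.
rewrite -(submK hle) mpolyXD.
apply: inAM.
  apply: low_in => i hi; rewrite mnmBE !mnmDE !mulmnE !mnm1E.
  case: (ord3 hp i) hi => [->//|->|->] _.
  - rewrite eqxx (ALP1 hp) (P1low hp) //; lia.
  - rewrite eqxx (P1AL hp) (ALlow hp) //; lia.
rewrite !mpolyXD -!mpolyXn; exact: Q_in.
Qed.
End Main.

Section Main.
Variables (k : fieldType) (p : nat) (hp : (2 <= p)%N).
Local Notation P1 := (inord p.-1 : 'I_p.+1).
Local Notation AL := (ord_max : 'I_p.+1).
Local Notation inAk := (@inAk k p).

Lemma case2_elem (le : rel 'X_{1..p.+1}) (hle : monomial_order le)
  (halpha : le U_(ord_max)%MM U_(inord p.-1)%MM) n j : (j + j <= n)%N ->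
  exists f, [/\ inAk f, f != 0 & is_lead_mon le f (U_(P1) *+ (n - j) + U_(AL) *+ j)%MM].
Proof.
move=> hj; set c := (n - (j + j))%N.
pose mm (i : 'I_c.+1) := (U_(P1) *+ (n - j - i) + U_(AL) *+ (j + i))%MM.
have mmAL i : mm i AL = (j + i)%N.
  by rewrite mnmDE !mulmnE !mnm1E eqxx (P1AL hp) mul0n mul1n.
pose f := ('X_P1 * 'X_AL) ^+ j * ('X_P1 + 'X_AL) ^+ c : {mpoly k[p.+1]}.
have fE : f = \sum_(i < c.+1) 'X_[mm i] *+ 'C(c, i).
  rewrite /f exprDn big_distrr; apply eq_bigr => i _; rewrite /= !mulrnAr; congr (_ *+ _).
  rewrite mpolyXD -!mpolyXn.
  have -> : (n - j - i = j + (c - i))%N by have := ltn_ord i; rewrite /c; lia.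
  by rewrite !exprD exprMn mulrACA.
have fc m' : f@_m' = \sum_(i < c.+1) (mm i == m')%:R *+ 'C(c, i).
  by rewrite fE raddf_sum; apply eq_bigr => i _; rewrite raddfMn /= mcoeffX.
have f0 : f@_(mm ord0) = 1.
  rewrite fc (bigD1 ord0) //= eqxx bin0 big1 ?addr0 // => i hi.
  have -> : (mm i == mm ord0) = false.
    apply/negbTE; apply: contra hi => /eqP /mnmP /(_ AL).
    rewrite !mmAL /= => h; apply/eqP/val_inj => /=; lia.
  by rewrite mul0rn.
have hsupp : mm ord0 \in msupp f by rewrite mcoeff_msupp f0 oner_neq0.
have -> : (U_(P1) *+ (n - j) + U_(AL) *+ j)%MM = mm ord0.
  by rewrite /mm /= subn0 addn0.
exists f; split.
- by apply: inAM; apply: inAX; [apply: inA_T | apply: inA_S].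
- by apply/eqP => h; move: f0; rewrite h raddf0 => /eqP; rewrite eq_sym oner_eq0.
- split => // m'; rewrite mcoeff_msupp fc => hm'.
  have [i /eqP <-] : exists i, mm i == m'.
    apply/existsP; apply: contraR hm' => /existsPn H.
    by apply/eqP; apply: big1 => i _; rewrite (negbTE (H i)) mul0rn.
  have e1 : mm i = (U_(P1) *+ (n - j - i) + U_(AL) *+ j + U_(AL) *+ i)%MM.
    apply/mnmP => l; rewrite !mnmDE !mulmnE; lia.
  have e2 : mm ord0 = (U_(P1) *+ (n - j - i) + U_(AL) *+ j + U_(P1) *+ i)%MM.
    apply/mnmP => l; rewrite !mnmDE !mulmnE /= subn0 addn0.
    have h : (n - j = n - j - i + i)%N by have := ltn_ord i; rewrite /c; lia.
    by rewrite {1}h mulnDr addnAC.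
  rewrite e1 e2; apply: (le_addl hle); exact: (le_mulU hle).
Qed.
End Main.

Lemma zdeg_low p (m : 'X_{1..p.+1}) (i : 'I_p) : (i.+1 < p)%N ->
  zdeg m i = m (widen_ord (leqnSn p) i).
Proof. by move=> h; rewrite /zdeg; have -> : (i.+1 == p) = false by apply/eqP; lia. Qed.

Lemma zdeg_top p (m : 'X_{1..p.+1}) (i : 'I_p) : (i.+1 = p)%N -> (2 <= p)%N ->
  zdeg m i = (m (inord p.-1) + m ord_max)%N.
Proof.
move=> h hp; rewrite /zdeg h eqxx; congr (m _ + _)%N.
by apply: val_inj; rewrite /= inordK; lia.
Qed.


Lemma lastc p (d : 'I_p -> nat) (i : 'I_p) : i.+1 = p -> last_coord d = d i.
Proof.
move=> h; move: d i h; case: p => [|q] d i h; first by case: i h.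
by rewrite /=; congr d; apply: val_inj => /=; lia.
Qed.

Theorem corollary6p4 (k : fieldType) (p : nat) (hp : (3 <= p)%N)
  (le : rel 'X_{1..p.+1}) (hle : monomial_order le)
  (halpha : le U_(ord_max)%MM U_(inord p.-1)%MM /\
            U_(ord_max)%MM != U_(inord p.-1)%MM :> 'X_{1..p.+1})
  (d : 'I_p -> nat) :
  has_dim (inA_deg (k := k) le d)
    (if [exists i : 'I_p, (i.+1 < p)%N && (0 < d i)%N]
     then (last_coord d).+1
     else ((last_coord d)./2).+1).
Proof.
have hp2 : (2 <= p)%N by lia.
set n := last_coord d.
have hpi : (p.-1 < p)%N by lia.
set iP := Ordinal hpi.
have hn : n = d iP by apply: lastc => /=; lia.
have ztop m : zdeg m iP = (m (inord p.-1) + m ord_max)%N by apply: zdeg_top => //=; lia.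
have P1lt : ~~ ((inord p.-1 : 'I_p.+1) < p.-1)%N by rewrite inordK; lia.
have ALlt : ~~ ((ord_max : 'I_p.+1) < p.-1)%N by rewrite /=; lia.
have vins (i : nat) : (i < p)%N -> val (insubd iP i) = i.
  by move=> h; rewrite val_insubd h.
have zlow m (i : 'I_p.+1) : (i < p.-1)%N -> zdeg m (insubd iP i) = m i.
  move=> hi; rewrite zdeg_low; last by rewrite vins; lia.
  by congr (m _); apply: val_inj; rewrite /= vins //; lia.
case: ifP => hex.
- move/existsP: hex => [i0 /andP [hi0 hdi0]].
  pose base := [multinom (if (i < p.-1)%N then d (insubd iP i) else 0%N) | i < p.+1].
  pose mon1 (j : 'I_n.+1) := (base + U_(inord p.-1) *+ (n - j) + U_(ord_max) *+ j)%MM.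
  have mon1AL j : mon1 j ord_max = j.
    rewrite !mnmDE !mulmnE !mnm1E mnmE (negbTE ALlt) eqxx (P1AL hp2); lia.
  have mon1P1 j : mon1 j (inord p.-1) = (n - j)%N.
    rewrite !mnmDE !mulmnE !mnm1E mnmE (negbTE P1lt) eqxx (ALP1 hp2); lia.
  have mon1low j (i : 'I_p.+1) : (i < p.-1)%N -> mon1 j i = d (insubd iP i).
    move=> hi; rewrite !mnmDE !mulmnE !mnm1E mnmE hi (lowP1 hp2 hi) (lowAL hp2 hi); lia.
  apply: (has_dim_mon (mon := mon1)).
  + move=> j1 j2 /mnmP /(_ ord_max); rewrite !mon1AL; exact: val_inj.
  + move=> j; exists (mon1 j); split => //.
    * move=> i; case: (ltnP i.+1 p) => hi.
        rewrite zdeg_low // mon1low /=; last by lia.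
        by congr d; apply: val_inj; rewrite vins //=; lia.
      have hiP : i = iP by apply: val_inj => /=; have := ltn_ord i; lia.
      rewrite hiP ztop mon1P1 mon1AL -hn; have := ltn_ord j; lia.
    * exists 'X_[mon1 j]; split.
      - have hw : ((widen_ord (leqnSn p) i0 : 'I_p.+1) < p.-1)%N by rewrite /=; lia.
        apply: (@mon_in k p hp2 _ _ hw); rewrite mon1low //.
        by have -> : insubd iP (widen_ord (leqnSn p) i0) = i0 by apply: val_inj; rewrite vins //=; lia.
      - by apply/eqP => h; move: (msuppX k (mon1 j)); rewrite h msupp0.
      - split; first by rewrite msuppX mem_seq1.
        by move=> m'; rewrite msuppX mem_seq1 => /eqP ->; apply: (mo_refl hle).
  + move=> q [m [-> hz _]].
    have hmn : (m ord_max < n.+1)%N by rewrite hn -hz ztop; lia.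
    exists (Ordinal hmn); congr mpolyX; apply/mnmP => i.
    case: (ord3 hp2 i) => [hi|->|->].
    * by rewrite mon1low // -hz zlow.
    * by rewrite mon1P1 /= hn -hz ztop; lia.
    * by rewrite mon1AL.
- have hd0 : forall i : 'I_p, (i.+1 < p)%N -> d i = 0%N.
    move=> i hi; move/negbT: hex => /existsPn /(_ i); rewrite hi /=; lia.
  pose mon2 (j : 'I_(n./2).+1) : 'X_{1..p.+1} := (U_(inord p.-1) *+ (n - j) + U_(ord_max) *+ j)%MM.
  have mon2AL j : mon2 j ord_max = j.
    rewrite !mnmDE !mulmnE !mnm1E eqxx (P1AL hp2); lia.
  have mon2P1 j : mon2 j (inord p.-1) = (n - j)%N.
    rewrite !mnmDE !mulmnE !mnm1E eqxx (ALP1 hp2); lia.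
  have mon2low j (i : 'I_p.+1) : (i < p.-1)%N -> mon2 j i = 0%N.
    move=> hi; rewrite !mnmDE !mulmnE !mnm1E (lowP1 hp2 hi) (lowAL hp2 hi); lia.
  have jj (j : 'I_(n./2).+1) : (j + j <= n)%N.
    by rewrite addnn -geq_half_double -ltnS.
  apply: (has_dim_mon (mon := mon2)).
  + move=> j1 j2 /mnmP /(_ ord_max); rewrite !mon2AL; exact: val_inj.
  + move=> j; exists (mon2 j); split => //.
    * move=> i; case: (ltnP i.+1 p) => hi.
        rewrite zdeg_low // mon2low ?hd0 //= ; lia.
      have hiP : i = iP by apply: val_inj => /=; have := ltn_ord i; lia.
      rewrite hiP ztop mon2P1 mon2AL -hn; have := jj j; lia.
    * have [f [hf hf0 hl]] := @case2_elem k p hp2 _ hle halpha.1 _ _ (jj j).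
      by exists f.
  + move=> q [m [-> hz [a [ha ha0 hl]]]].
    have hfree : ufree m.
      apply/forallP => i; apply/implyP => hi; rewrite -zlow // hz hd0 //.
      by rewrite vins; lia.
    have h1 := @case2_lead k p hp2 _ hle halpha _ _ ha hl hfree.
    have h2 : (m (inord p.-1) + m ord_max = n)%N by rewrite hn -hz ztop.
    have hmn : (m ord_max < (n./2).+1)%N.
      by rewrite ltnS geq_half_double -addnn; lia.
    exists (Ordinal hmn); congr mpolyX; apply/mnmP => i.
    case: (ord3 hp2 i) => [hi|->|->].
    * rewrite mon2low //; apply/eqP; exact: (implyP (forallP hfree i)).
    * by rewrite mon2P1 /=; lia.
    * by rewrite mon2AL.
Qed.
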